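(* Every binary network that admits an HGT-consistent labelling is orchard.
   Context: A (directed phylogenetic) network on a finite taxa set $X$ is a directed acyclic graph without parallel arcs whose nodes are of the following types: a unique root (indegree 0, outdegree 1); tree nodes (indegree 1, outdegree at least 2); reticulations (indegree at least 2, outdegree 1); leaves (indegree 1, outdegree 0), the leaves being bijectively labelled by $X$. Non-leaf nodes are called internal. A network is binary if every tree node and every reticulation has total degree (indegree plus outdegree) exactly 3. A tree is a network without reticulations. Orchard networks: An ordered pair of leaves $(x,y)$ is a cherry if $x$ and $y$ have a common parent; it is a reticulated cherry if the parent $p_x$ of $x$ is a reticulation and $p_x$ and $y$ have a common parent. Let $p_x,p_y$ be the parents of $x,y$. Reducing $(x,y)$ in a network $N$: if $(x,y)$ is a cherry, delete $x$ and suppress $p_x$ if it now has indegree 1 and outdegree 1; if $(x,y)$ is a reticulated cherry, delete the arc $(p_y,p_x)$ and suppress any resulting node of indegree 1 and outdegree 1; otherwise do nothing. (Suppressing a node $v$ with one parent $u$ and one child $w$ means deleting $v$ and adding the arc $(u,w)$.) For a sequence $S$ of ordered pairs, $NS$ denotes the result of reducing the pairs of $S$ in order. $N$ is orchard if there is a sequence $S$ such that $NS$ is a tree with exactly one leaf. HGT-consistent labelling: Let $N$ be a binary network with node set $V$. An HGT-consistent labelling of $N$ is a map $t:V\to\mathbb{R}$ such that (1) for every arc $(u,v)$, $t(u)\le t(v)$, and equality is allowed only if $v$ is a reticulation; (2) every internal node $u$ has a child $v$ with $t(u)<t(v)$; (3) for every reticulation $r$ with parents $u$ and $v$, exactly one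 of $t(u)=t(r)$ and $t(v)=t(r)$ holds. *)

(* Defs.v *)
From Stdlib Require Import Reals Relations.
From mathcomp Require Import all_boot.

Set Implicit Arguments.
Unset Strict Implicit.
Unset Printing Implicit Defensive.

(* A directed graph is given by its list of arcs on nodes of type nat.
   Leaves are labelled by themselves (the taxa set X is the set of leaves). *)
Definition arcs := seq (nat * nat).

Definition nodes (A : arcs) : seq nat :=
  undup (flatten [seq [:: a.1; a.2] | a <- A]).

Definition indeg (A : arcs) (v : nat) : nat := count (fun a => a.2 == v) A.
Definition outdeg (A : arcs) (v : nat) : nat := count (fun a => a.1 == v) A.

(* some parent / child of v (the unique one when indeg / outdeg is 1) *)
Definition parent (A : arcs) (v : nat) : nat :=
  head 0 [seq a.1 | a <- A & a.2 == v].
Definition child (A : arcs) (v : nat) : nat :=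
  head 0 [seq a.2 | a <- A & a.1 == v].

Definition is_root (A : arcs) v := (indeg A v == 0) && (outdeg A v == 1).
Definition is_tree_node (A : arcs) v := (indeg A v == 1) && (2 <= outdeg A v).
Definition is_ret (A : arcs) v := (2 <= indeg A v) && (outdeg A v == 1).
Definition is_leaf (A : arcs) v := (indeg A v == 1) && (outdeg A v == 0).

Definition arc_rel (A : arcs) : relation nat := fun u w => (u, w) \in A.

Definition acyclic (A : arcs) : Prop :=
  forall v, ~ clos_trans nat (arc_rel A) v v.

(* directed phylogenetic network (no parallel arcs = uniq list of arcs) *)
Definition network (A : arcs) : Prop :=
  [/\ uniq A, acyclic A,
      count (fun v => indeg A v == 0) (nodes A) = 1 &
      forall v, v \in nodes A ->
        [|| is_root A v, is_tree_node A v, is_ret A v | is_leaf A v]].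

Definition binary (A : arcs) : Prop :=
  forall v, v \in nodes A ->
    (is_tree_node A v -> outdeg A v = 2) /\ (is_ret A v -> indeg A v = 2).

Definition is_tree (A : arcs) : Prop :=
  network A /\ forall v, v \in nodes A -> ~~ is_ret A v.

Definition leaves (A : arcs) : seq nat := [seq v <- nodes A | is_leaf A v].

Definition is_cherry (A : arcs) (x y : nat) : bool :=
  [&& x != y, is_leaf A x, is_leaf A y & parent A x == parent A y].

Definition is_ret_cherry (A : arcs) (x y : nat) : bool :=
  [&& x != y, is_leaf A x, is_leaf A y, is_ret A (parent A x)
    & (parent A y, parent A x) \in A].

Definition suppress (A : arcs) (v : nat) : arcs :=
  if (indeg A v == 1) && (outdeg A v == 1) then
    (parent A v, child A v) :: [seq a <- A | (a.1 != v) && (a.2 != v)]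
  else A.

Definition reduce (A : arcs) (xy : nat * nat) : arcs :=
  let: (x, y) := xy in
  if is_cherry A x y then
    let px := parent A x in
    suppress [seq a <- A | a != (px, x)] px
  else if is_ret_cherry A x y then
    let px := parent A x in
    let py := parent A y in
    suppress (suppress [seq a <- A | a != (py, px)] px) py
  else A.

Definition reduce_seq (A : arcs) (S : seq (nat * nat)) : arcs :=
  foldl reduce A S.

Definition orchard (A : arcs) : Prop :=
  exists S : seq (nat * nat),
    is_tree (reduce_seq A S) /\ size (leaves (reduce_seq A S)) = 1.

Definition HGT_consistent (A : arcs) (t : nat -> R) : Prop :=
  [/\ (forall u v, (u, v) \in A -> Rle (t u) (t v) /\ (t u = t v -> is_ret A v)),
      (forall u, u \in nodes A -> 0 < outdeg A u ->
         exists v, (u, v) \in A /\ Rlt (t u) (t v)) &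
      (forall r u v, is_ret A r -> (u, r) \in A -> (v, r) \in A -> u <> v ->
         (t u = t r <-> t v <> t r))].

(* Main.v *)
Require Import Defs.
From Stdlib Require Import Reals Relations Lra Classical.
From mathcomp Require Import all_boot zify.
Set Implicit Arguments. Unset Strict Implicit. Unset Printing Implicit Defensive.

Lemma count_ge (T : eqType) (P : pred T) (s l : seq T) :
  uniq l -> (forall b, b \in l -> (b \in s) && P b) -> size l <= count P s.
Proof.
move=> ul H; rewrite -size_filter; apply: uniq_leq_size => // b /H.
by rewrite mem_filter andbC.
Qed.

Lemma count_le (T : eqType) (P : pred T) (s l : seq T) :
  uniq s -> (forall b, b \in s -> P b -> b \in l) -> count P s <= size l.
Proof.
move=> us H; rewrite -size_filter; apply: uniq_leq_size; first exact: filter_uniq.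
by move=> b; rewrite mem_filter => /andP[Pb bs]; apply: H.
Qed.

Lemma count_enum (T : eqType) (P : pred T) (s l : seq T) :
  uniq s -> uniq l -> (forall b, (b \in s) && P b = (b \in l)) -> count P s = size l.
Proof.
move=> us ul H; apply/eqP; rewrite eqn_leq.
rewrite (count_le (l:=l)) //=; last by move=> b bs Pb; rewrite -H bs.
by rewrite count_ge // => b; rewrite H.
Qed.

Lemma count0 (T : eqType) (P : pred T) (s : seq T) :
  (forall b, b \in s -> ~~ P b) -> count P s = 0.
Proof.
elim: s => //= a s IH H; rewrite IH; last by move=> b bs; apply: H; rewrite inE bs orbT.
by have := H a (mem_head _ _); case: (P a).
Qed.

Lemma count_pos_ex (T : eqType) (P : pred T) (s : seq T) :
  0 < count P s -> exists2 b, b \in s & P b.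
Proof. by rewrite -has_count => /hasP. Qed.

Lemma mem_nodes A w : (w \in nodes A) = (0 < indeg A w + outdeg A w).
Proof.
rewrite /nodes mem_undup addn_gt0 /indeg /outdeg -!has_count.
elim: A => //= a A IH; rewrite !inE IH.
rewrite (eq_sym w a.1) (eq_sym w a.2).
by case: (a.1 == w); case: (a.2 == w); case: (has _ A); case: (has _ A).
Qed.

Lemma ct_mono (r1 r2 : relation nat) a b :
  (forall x y, r1 x y -> clos_trans nat r2 x y) -> clos_trans nat r1 a b -> clos_trans nat r2 a b.
Proof.
move=> H; elim => [x y /H //|x y z _ IH1 _ IH2]; exact: t_trans IH1 IH2.
Qed.

Lemma exists_max (t : nat -> R) (s : seq nat) :
  s != [::] -> exists2 m, m \in s & forall w, w \in s -> Rle (t w) (t m).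
Proof.
elim: s => //= a s IH _.
case: (eqVneq s [::]) => [->|ne].
  by exists a; rewrite ?inE // => w; rewrite inE => /eqP->; lra.
have [m ms Hm] := IH ne.
case: (Rle_lt_dec (t a) (t m)) => h.
  exists m; first by rewrite inE ms orbT.
  by move=> w; rewrite inE => /orP[/eqP->//|/Hm].
exists a; first by rewrite inE eqxx.
move=> w; rewrite inE => /orP[/eqP->|/Hm]; lra.
Qed.

Lemma parent_eq A p v : (p, v) \in A -> (forall q, (q, v) \in A -> q = p) -> parent A v = p.
Proof.
rewrite /parent; elim: A => //= a A IH; rewrite inE => Hin H.
case: ifP => [/eqP e|ne] /=.
  by apply: H; rewrite -e -surjective_pairing mem_head.
apply: IH => [|q qA]; last by apply: H; rewrite inE qA orbT.
case/orP: Hin => // /eqP ea; by rewrite -ea eqxx in ne.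
Qed.

Lemma child_eq A c v : (v, c) \in A -> (forall q, (v, q) \in A -> q = c) -> child A v = c.
Proof.
rewrite /child; elim: A => //= a A IH; rewrite inE => Hin H.
case: ifP => [/eqP e|ne] /=.
  by apply: H; rewrite -e -surjective_pairing mem_head.
apply: IH => [|q qA]; last by apply: H; rewrite inE qA orbT.
case/orP: Hin => // /eqP ea; by rewrite -ea eqxx in ne.
Qed.


Lemma in1 A v p q : uniq A -> indeg A v = 1 -> (p,v) \in A -> (q,v) \in A -> q = p.
Proof.
move=> uA d pA qA; apply/eqP; apply/negP => /negP ne.
have : 2 <= indeg A v.
  apply: (count_ge (l := [:: (p,v); (q,v)])).
    by rewrite /= inE xpair_eqE eqxx andbT eq_sym (negbTE ne).
  by move=> b; rewrite !inE => /orP[]/eqP->; rewrite eqxx andbT.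
lia.
Qed.

Lemma out1 A v p q : uniq A -> outdeg A v = 1 -> (v,p) \in A -> (v,q) \in A -> q = p.
Proof.
move=> uA d pA qA; apply/eqP; apply/negP => /negP ne.
have : 2 <= outdeg A v.
  apply: (count_ge (l := [:: (v,p); (v,q)])).
    by rewrite /= inE xpair_eqE eqxx /= eq_sym (negbTE ne).
  by move=> b; rewrite !inE => /orP[]/eqP->; rewrite eqxx andbT.
lia.
Qed.

Lemma in2 A v p q r : uniq A -> indeg A v = 2 -> (p,v) \in A -> (q,v) \in A -> (r,v) \in A ->
  p <> q -> r = p \/ r = q.
Proof.
move=> uA d pA qA rA ne.
case: (eqVneq r p) => [->|rp]; first by left.
case: (eqVneq r q) => [->|rq]; first by right.
have : 3 <= indeg A v.
  apply: (count_ge (l := [:: (p,v); (q,v); (r,v)])).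
    rewrite /= !inE !xpair_eqE !eqxx !andbT (eq_sym p r) (eq_sym q r) (negbTE rp) (negbTE rq).
    by have -> : (p == q) = false by apply/eqP.
  by move=> b; rewrite !inE => /orP[/eqP->|/orP[]/eqP->]; rewrite eqxx andbT.
lia.
Qed.

Lemma out2 A v p q r : uniq A -> outdeg A v = 2 -> (v,p) \in A -> (v,q) \in A -> (v,r) \in A ->
  p <> q -> r = p \/ r = q.
Proof.
move=> uA d pA qA rA ne.
case: (eqVneq r p) => [->|rp]; first by left.
case: (eqVneq r q) => [->|rq]; first by right.
have : 3 <= outdeg A v.
  apply: (count_ge (l := [:: (v,p); (v,q); (v,r)])).
    rewrite /= !inE !xpair_eqE !eqxx /= (eq_sym p r) (eq_sym q r) (negbTE rp) (negbTE rq).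
    by have -> : (p == q) = false by apply/eqP.
  by move=> b; rewrite !inE => /orP[/eqP->|/orP[]/eqP->] /=; rewrite eqxx ?andbT.
lia.
Qed.

Lemma ex_in A v : 0 < indeg A v -> exists p, (p,v) \in A.
Proof.
move/count_pos_ex => [[a b] ab /= /eqP e]; exists a; by rewrite -e.
Qed.

Lemma ex_out A v : 0 < outdeg A v -> exists p, (v,p) \in A.
Proof.
move/count_pos_ex => [[a b] ab /= /eqP e]; exists b; by rewrite -e.
Qed.


Lemma ex_in2 A v p : uniq A -> 2 <= indeg A v -> (p,v) \in A -> exists q, (q,v) \in A /\ q <> p.
Proof.
move=> uA d pA; apply: NNPP => H.
have : indeg A v <= 1.
  apply: (@count_le _ _ A [:: (p,v)]) => // [[a b]] ab /= /eqP e; subst b.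
  rewrite inE; apply/eqP; congr pair; apply: NNPP => ne; apply: H; by exists a.
lia.
Qed.

Lemma ex_out2 A v p : uniq A -> 2 <= outdeg A v -> (v,p) \in A -> exists q, (v,q) \in A /\ q <> p.
Proof.
move=> uA d pA; apply: NNPP => H.
have : outdeg A v <= 1.
  apply: (@count_le _ _ A [:: (v,p)]) => // [[a b]] ab /= /eqP e; subst a.
  rewrite inE; apply/eqP; congr pair; apply: NNPP => ne; apply: H; by exists b.
lia.
Qed.

Lemma indeg_pos A a b : (a,b) \in A -> 0 < indeg A b.
Proof. move=> ab; rewrite /indeg -has_count; apply/hasP; by exists (a,b). Qed.
Lemma outdeg_pos A a b : (a,b) \in A -> 0 < outdeg A a.
Proof. move=> ab; rewrite /outdeg -has_count; apply/hasP; by exists (a,b). Qed.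

Lemma arc_neq A a b : acyclic A -> (a,b) \in A -> a <> b.
Proof. move=> ac ab e; subst; apply: (ac b); exact: t_step. Qed.


Lemma transfer A Rr (D : seq nat) (t : nat -> R) :
  network A -> binary A -> HGT_consistent A t ->
  uniq Rr ->
  (forall w, w \notin D -> indeg Rr w = indeg A w /\ outdeg Rr w = outdeg A w) ->
  (forall w, w \in D -> indeg Rr w = 0 /\ outdeg Rr w = 0) ->
  (forall w, w \in D -> 0 < indeg A w) ->
  (forall a b, (a,b) \in Rr -> (a,b) \in A \/
      [/\ Rlt (t a) (t b), ~~ is_ret A b & clos_trans nat (arc_rel A) a b]) ->
  (forall a b, (a,b) \in A -> a \notin D -> Rlt (t a) (t b) ->
      exists b', (a,b') \in Rr /\ Rlt (t a) (t b')) ->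
  [/\ network Rr, binary Rr & HGT_consistent Rr t].
Proof.
move=> [uA acA rootA typA] binA [H1 H2 H3] uR degN degD Dpos arcR wit.
have ndD w : w \in nodes Rr -> w \notin D.
  rewrite mem_nodes => h; apply/negP => /degD [a b]; move: h; rewrite a b.
  by [].
have ndA w : w \in nodes Rr -> w \in nodes A.
  move=> h; have [a b] := degN _ (ndD _ h); move: h; by rewrite !mem_nodes a b.
have sameT w : w \in nodes Rr ->
   [/\ is_root Rr w = is_root A w, is_tree_node Rr w = is_tree_node A w,
       is_ret Rr w = is_ret A w & is_leaf Rr w = is_leaf A w].
  move=> h; have [a b] := degN _ (ndD _ h).
  by rewrite /is_root /is_tree_node /is_ret /is_leaf a b.
split.
- split => //.
  + move=> v /(ct_mono (r2 := arc_rel A)) h; apply: (acA v); apply: h.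
    move=> x y xy; case: (arcR _ _ xy) => [xA|[_ _ //]]; exact: t_step.
  + have pe : perm_eq (nodes Rr) [seq w <- nodes A | w \notin D].
      apply: uniq_perm; [exact: undup_uniq| apply: filter_uniq; exact: undup_uniq|].
      move=> w; rewrite mem_filter; case: (boolP (w \in D)) => wD /=.
        rewrite mem_nodes; by have [-> ->] := degD _ wD.
      have [a b] := degN _ wD; by rewrite !mem_nodes a b.
    rewrite (permP pe) count_filter -rootA; apply: eq_in_count => w wA /=.
    case: (boolP (w \in D)) => wD /=.
      rewrite andbF; have := Dpos _ wD; by case: (indeg A w).
    by have [-> _] := degN _ wD; rewrite andbT.
  + move=> v vR; have [-> -> -> ->] := sameT _ vR; apply: typA; exact: ndA.
- move=> v vR; have [_ -> -> _] := sameT _ vR; have [a b] := degN _ (ndD _ vR).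
  rewrite a b; apply: binA; exact: ndA.
- split.
  + move=> u v uv; case: (arcR _ _ uv) => [uvA|[lt nr _]]; last first.
      split; first lra. move=> e; rewrite e in lt; lra.
    have [le hr] := H1 _ _ uvA; split => // e.
    have vR : v \in nodes Rr by rewrite mem_nodes addn_gt0 (indeg_pos uv).
    have [_ _ -> _] := sameT _ vR; exact: hr.
  + move=> u uRn op.
    have uD := ndD _ uRn; have [_ b] := degN _ uD.
    rewrite b in op; have [v [uv lt]] := H2 u (ndA _ uRn) op.
    exact: (wit _ _ uv uD lt).
  + move=> r u v rr ur vr ne.
    have rR : r \in nodes Rr by rewrite mem_nodes addn_gt0 (indeg_pos ur).
    have [_ _ e _] := sameT _ rR; rewrite e in rr.
    have inA x : (x, r) \in Rr -> (x, r) \in A.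
      by move=> xr; case: (arcR _ _ xr) => // [[_ nr _]]; rewrite rr in nr.
    exact: H3 rr (inA _ ur) (inA _ vr) ne.
Qed.


Lemma decomp (A L F : arcs) : uniq A -> uniq L -> uniq F -> {subset F <= A} -> {subset L <= A} ->
  (forall b, b \in A -> b \notin F -> b \in L) -> (forall b, b \in L -> b \notin F) ->
  perm_eq A (L ++ F).
Proof.
move=> uA uL uF FA LA AL LF; apply: uniq_perm => //.
  rewrite cat_uniq uL uF andbT /=; apply/hasPn => b bF; apply/negP => /LF; by rewrite bF.
move=> b; rewrite mem_cat; apply/idP/orP.
  by case: (boolP (b \in F)) => bF bA; [right|left; exact: AL].
by case=> [/LA|/FA].
Qed.

Lemma count_perm (A L F : arcs) P : perm_eq A (L ++ F) -> count P A = count P L + count P F.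
Proof. by move=> pe; rewrite (permP pe) count_cat. Qed.

Lemma HGT_strict A t a b : HGT_consistent A t -> (a,b) \in A -> ~~ is_ret A b -> Rlt (t a) (t b).
Proof.
move=> [H1 _ _] ab nr; have [le h] := H1 _ _ ab.
case: (Req_dec (t a) (t b)) => e; last lra.
by move: (h e); rewrite (negbTE nr).
Qed.


Lemma cherry_step A t v pv x y :
  network A -> binary A -> HGT_consistent A t ->
  is_tree_node A v -> (pv,v) \in A -> (v,x) \in A -> (v,y) \in A -> x <> y ->
  is_leaf A x -> is_leaf A y ->
  [/\ network (reduce A (x,y)), binary (reduce A (x,y)), HGT_consistent (reduce A (x,y)) t
    & size (reduce A (x,y)) < size A].
Proof.
move=> nA bA hA vT pvA vxA vyA xy lx ly.
have [uA acA _ _] := nA.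
have vN : v \in nodes A by rewrite mem_nodes addn_gt0 (outdeg_pos vxA) orbT.
have [vi vo] : indeg A v = 1 /\ outdeg A v = 2.
  have [o2 _] := bA v vN; split; last exact: o2.
  by move: vT => /andP[/eqP].
move: (lx) (ly) => /andP[/eqP xi /eqP xo] /andP[/eqP yi /eqP yo].
have pvv : pv <> v := arc_neq acA pvA.
have vx : v <> x := arc_neq acA vxA.
have vy : v <> y := arc_neq acA vyA.
have pvx : pv <> x by move=> e; move: (outdeg_pos pvA); rewrite e xo.
have pvy : pv <> y by move=> e; move: (outdeg_pos pvA); rewrite e yo.
have vnr : ~~ is_ret A v by rewrite /is_ret vi.
have ynr : ~~ is_ret A y by rewrite /is_ret yo andbF.
have xnr : ~~ is_ret A x by rewrite /is_ret xo andbF.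
have parx : parent A x = v := parent_eq vxA (fun q qx => in1 uA xi vxA qx).
have pary : parent A y = v := parent_eq vyA (fun q qy => in1 uA yi vyA qy).
have vxF : (v == x) = false by apply/eqP.
have vyF : (v == y) = false by apply/eqP.
have xyF : (x == y) = false by apply/eqP.
have pvvF : (pv == v) = false by apply/eqP.
have chq : is_cherry A x y by rewrite /is_cherry lx ly parx pary eqxx xyF.
set A1 := [seq a <- A | a != (v,x)].
have A1A : {subset A1 <= A} by move=> b; rewrite mem_filter => /andP[].
have iA1 : indeg A1 v = 1.
  rewrite /indeg (count_enum (l:=[:: (pv,v)])) //; first exact: filter_uniq.
  move=> [b1 b2]; rewrite mem_filter inE /= !xpair_eqE.
  case: (eqVneq b2 v) => [->|_]; last by rewrite !andbF.
  rewrite !andbT vxF andbF /=; apply/idP/eqP => [h|->//].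
  exact: in1 uA vi pvA h.
have oA1 : outdeg A1 v = 1.
  rewrite /outdeg (count_enum (l:=[:: (v,y)])) //; first exact: filter_uniq.
  move=> [b1 b2]; rewrite mem_filter inE /= !xpair_eqE.
  case: (eqVneq b1 v) => [->|_]; last by rewrite !andbF.
  rewrite !andbT /=.
  case: (eqVneq b2 y) => [->|ny]; first by rewrite (eq_sym y x) xyF vyA.
  case: (eqVneq b2 x) => [->|nx] //=.
  apply/negP => h; case: (out2 uA vo vxA vyA h xy) => e; by [rewrite e eqxx in nx | rewrite e eqxx in ny].
have parA1 : parent A1 v = pv.
  apply: parent_eq; first by rewrite mem_filter pvA xpair_eqE pvvF.
  move=> q /A1A qv; exact: in1 uA vi pvA qv.
have chA1 : child A1 v = y.
  apply: child_eq; first by rewrite mem_filter vyA xpair_eqE eqxx (eq_sym y x) xyF.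
  move=> q; rewrite mem_filter => /andP[nq qA].
  case: (out2 uA vo vxA vyA qA xy) => // e; by rewrite e eqxx in nq.
set F := [seq a <- A1 | (a.1 != v) && (a.2 != v)].
have red : reduce A (x,y) = (pv,y) :: F.
  by rewrite /reduce chq parx /suppress -/A1 iA1 oA1 /= parA1 chA1.
rewrite red.
have memF b : b \in F = [&& b.1 != v, b.2 != v, b != (v,x) & b \in A].
  by rewrite !mem_filter -!andbA.
have FA : {subset F <= A} by move=> b; rewrite memF => /and4P[].
set L := [:: (pv,v); (v,x); (v,y)].
have pe : perm_eq A (L ++ F).
  apply: decomp => //.
    by rewrite /= !inE !xpair_eqE pvvF xyF andbF.
  - by do 2 apply: filter_uniq.
  - by move=> b; rewrite !inE => /or3P[]/eqP->.
  - move=> [b1 b2] b1A; rewrite memF /= !inE !xpair_eqE.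
    case: (eqVneq b1 v) => [e|n1] /=.
      subst b1; move=> _; case: (out2 uA vo vxA vyA b1A xy) => ->; by rewrite eqxx !orbT.
    case: (eqVneq b2 v) => [e|n2] /=.
      by subst b2; rewrite (in1 uA vi pvA b1A) eqxx.
    by rewrite b1A.
  - by move=> b; rewrite memF !inE => /or3P[]/eqP->/=; rewrite eqxx ?andbF.
have notF : (pv, y) \notin F.
  apply/negP => /FA h; exact: pvv (in1 uA yi vyA h).
have vwF w : w \notin [:: v; x] -> (v == w) = false /\ (x == w) = false.
  by rewrite !inE negb_or => /andP[a b]; split; apply/negbTE; rewrite eq_sym.
have Fnv b : b \in F -> (b.1 != v) && (b.2 != v) by rewrite memF => /and4P[-> ->].
have [nR bR hR] : [/\ network ((pv,y)::F), binary ((pv,y)::F) & HGT_consistent ((pv,y)::F) t].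
  apply: (transfer (D := [:: v; x]) nA bA hA).
  - by rewrite /= notF; do 2 apply: filter_uniq.
  - move=> w /vwF [e1 e2]; by rewrite /indeg /outdeg !(count_perm _ pe) /= e1 e2 /= !add0n !addn0.
  - move=> w; rewrite !inE => /orP[]/eqP->; rewrite /indeg /outdeg /=.
    + rewrite eq_sym vyF pvvF !count0 //.
      * by move=> b /Fnv /andP[/negbTE->].
      * by move=> b /Fnv /andP[_ /negbTE->].
    + have -> : (y == x) = false by rewrite eq_sym xyF.
      have -> : (pv == x) = false by apply/eqP.
      rewrite !count0 //.
      * move=> [b1 b2] bF; apply/negP => /eqP /= e; subst b1.
        by move: (outdeg_pos (FA _ bF)); rewrite xo.
      * move=> [b1 b2] bF; apply/negP => /eqP /= e; subst b2.
        have := Fnv _ bF; by rewrite (in1 uA xi vxA (FA _ bF)) eqxx.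
  - by move=> w; rewrite !inE => /orP[]/eqP->; rewrite ?vi ?xi.
  - move=> a b; rewrite inE => /orP[/eqP [-> ->]|/FA]; last by left.
    right; split => //.
    + have := HGT_strict hA pvA vnr; have := HGT_strict hA vyA ynr; lra.
    + apply: (t_trans _ _ _ v); exact: t_step.
  - move=> a b ab aD lt; case: (boolP ((a,b) \in F)) => abF.
      by exists b; rewrite inE abF orbT.
    have := (perm_mem pe (a,b)); rewrite ab mem_cat (negbTE abF) orbF !inE !xpair_eqE.
    move: aD; rewrite !inE negb_or => /andP[/negbTE av _]; rewrite av /= orbF => /esym/andP[/eqP -> _].
    exists y; split; first by rewrite mem_head.
    have := HGT_strict hA pvA vnr; have := HGT_strict hA vyA ynr; lra.
split => //.
by rewrite (perm_size pe) size_cat /=.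
Qed.


Lemma ret_step A t u r u2 pu x y :
  network A -> binary A -> HGT_consistent A t ->
  is_tree_node A u -> is_ret A r -> (u,r) \in A -> t u = t r -> (u,y) \in A ->
  (r,x) \in A -> (u2,r) \in A -> u2 <> u -> (pu,u) \in A ->
  is_leaf A x -> is_leaf A y ->
  [/\ network (reduce A (x,y)), binary (reduce A (x,y)), HGT_consistent (reduce A (x,y)) t
    & size (reduce A (x,y)) < size A].
Proof.
move=> nA bA hA uT rR urA tur uyA rxA u2A u2u puA lx ly.
have [uA acA _ _] := nA.
have uN : u \in nodes A by rewrite mem_nodes addn_gt0 (outdeg_pos uyA) orbT.
have rN : r \in nodes A by rewrite mem_nodes addn_gt0 (outdeg_pos rxA) orbT.
have [ui uo] : indeg A u = 1 /\ outdeg A u = 2.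
  have [o2 _] := bA u uN; split; last exact: o2.
  by move: uT => /andP[/eqP].
have [ri ro] : indeg A r = 2 /\ outdeg A r = 1.
  have [_ i2] := bA r rN; split; first exact: i2.
  by move: rR => /andP[_ /eqP].
move: (lx) (ly) => /andP[/eqP xi /eqP xo] /andP[/eqP yi /eqP yo].
have unr : ~~ is_ret A u by rewrite /is_ret ui.
have ynr : ~~ is_ret A y by rewrite /is_ret yo andbF.
have xnr : ~~ is_ret A x by rewrite /is_ret xo andbF.
have ur : u <> r := arc_neq acA urA.
have uy : u <> y := arc_neq acA uyA.
have rx : r <> x := arc_neq acA rxA.
have u2r : u2 <> r := arc_neq acA u2A.
have puu : pu <> u := arc_neq acA puA.
have ux : u <> x by move=> e; move: (outdeg_pos uyA); rewrite e xo.
have ry : r <> y by move=> e; move: (outdeg_pos rxA); rewrite e yo.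
have pux : pu <> x by move=> e; move: (outdeg_pos puA); rewrite e xo.
have puy : pu <> y by move=> e; move: (outdeg_pos puA); rewrite e yo.
have u2x : u2 <> x by move=> e; move: (outdeg_pos u2A); rewrite e xo.
have xy : x <> y by move=> e; subst y; exact: ur (in1 uA xi rxA uyA).
have pur : pu <> r by move=> e; subst pu; exact: ux (out1 uA ro rxA puA).
have parx : parent A x = r := parent_eq rxA (fun q qx => in1 uA xi rxA qx).
have pary : parent A y = u := parent_eq uyA (fun q qy => in1 uA yi uyA qy).
have urF : (u == r) = false by apply/eqP.
have uyF : (u == y) = false by apply/eqP.
have uxF : (u == x) = false by apply/eqP.
have rxF : (r == x) = false by apply/eqP.
have ryF : (r == y) = false by apply/eqP.
have xyF : (x == y) = false by apply/eqP.
have u2uF : (u2 == u) = false by apply/eqP.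
have u2rF : (u2 == r) = false by apply/eqP.
have puuF : (pu == u) = false by apply/eqP.
have purF : (pu == r) = false by apply/eqP.
have chq : is_cherry A x y = false.
  by rewrite /is_cherry parx pary (eq_sym r u) urF !andbF.
have rchq : is_ret_cherry A x y.
  by rewrite /is_ret_cherry lx ly parx pary rR urA xyF.
set A1 := [seq a <- A | a != (u,r)].
have A1A : {subset A1 <= A} by move=> b; rewrite mem_filter => /andP[].
have iA1 : indeg A1 r = 1.
  rewrite /indeg (count_enum (l:=[:: (u2,r)])) //; first exact: filter_uniq.
  move=> [b1 b2]; rewrite mem_filter inE /= !xpair_eqE.
  case: (eqVneq b2 r) => [->|_]; last by rewrite !andbF.
  rewrite !andbT /=; apply/idP/eqP => [/andP[nb h]|->].
    case: (in2 uA ri urA u2A h (fun e => u2u (esym e))) => // e.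
    by rewrite e eqxx in nb.
  by rewrite u2uF u2A.
have oA1 : outdeg A1 r = 1.
  rewrite /outdeg (count_enum (l:=[:: (r,x)])) //; first exact: filter_uniq.
  move=> [b1 b2]; rewrite mem_filter inE /= !xpair_eqE.
  case: (eqVneq b1 r) => [->|_]; last by rewrite !andbF.
  rewrite !andbT eq_sym urF /=; apply/idP/eqP => [h|->//].
  exact: out1 uA ro rxA h.
have parA1 : parent A1 r = u2.
  apply: parent_eq; first by rewrite mem_filter u2A xpair_eqE u2uF.
  move=> q; rewrite mem_filter => /andP[nq qA].
  case: (in2 uA ri urA u2A qA (fun e => u2u (esym e))) => // e.
  by rewrite e eqxx in nq.
have chA1 : child A1 r = x.
  apply: child_eq; first by rewrite mem_filter rxA xpair_eqE eq_sym urF.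
  move=> q /A1A qA; exact: out1 uA ro rxA qA.
set F1 := [seq a <- A1 | (a.1 != r) && (a.2 != r)].
have memF1 b : b \in F1 = [&& b.1 != r, b.2 != r, b != (u,r) & b \in A].
  by rewrite !mem_filter -!andbA.
have F1A : {subset F1 <= A} by move=> b; rewrite memF1 => /and4P[].
have uF1 : uniq F1 by do 2 apply: filter_uniq.
have u2xF1 : (u2, x) \notin F1.
  by apply/negP => /F1A h; exact: u2r (in1 uA xi rxA h).
have uR1 : uniq ((u2,x) :: F1) by rewrite /= u2xF1.
have iR1 : indeg ((u2,x) :: F1) u = 1.
  rewrite /indeg (count_enum (l:=[:: (pu,u)])) //.
  move=> [b1 b2]; rewrite inE memF1 /= !inE !xpair_eqE.
  case: (eqVneq b2 u) => [->|_]; last by rewrite !andbF.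
  rewrite eq_sym uxF andbF /= urF !andbT andbF /=.
  apply/idP/eqP => [/andP[_ h]|->].
    exact: in1 uA ui puA h.
  by rewrite puA andbT; apply/eqP.
have oR1 : outdeg ((u2,x) :: F1) u = 1.
  rewrite /outdeg (count_enum (l:=[:: (u,y)])) //.
  move=> [b1 b2]; rewrite inE memF1 /= !inE !xpair_eqE.
  case: (eqVneq b1 u) => [->|_]; last by rewrite !andbF.
  rewrite (eq_sym u u2) u2uF /= urF /= !andbT.
  apply/idP/eqP => [/and3P[nr _ h]|->].
    case: (out2 uA uo urA uyA h (fun e => ry e)) => // e.
    by rewrite e eqxx in nr.
  by rewrite (eq_sym y r) ryF uyA.
have parR1 : parent ((u2,x) :: F1) u = pu.
  apply: parent_eq; first by rewrite inE memF1 puA /= !xpair_eqE puuF purF urF orbT.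
  move=> q; rewrite inE xpair_eqE eq_sym uxF andbF /= => /F1A h.
  exact: in1 uA ui puA h.
have chR1 : child ((u2,x) :: F1) u = y.
  apply: child_eq; first by rewrite inE memF1 uyA /= !xpair_eqE (eq_sym u u2) u2uF urF (eq_sym y r) ryF eqxx /= /=.
  move=> q; rewrite inE xpair_eqE eq_sym u2uF /= memF1 /= => /and4P[_ nr _ h].
  case: (out2 uA uo urA uyA h (fun e => ry e)) => // e.
  by rewrite e eqxx in nr.
set F := [seq a <- F1 | (a.1 != u) && (a.2 != u)].
have red : reduce A (x,y) = (pu,y) :: (u2,x) :: F.
  rewrite /reduce chq rchq parx pary /suppress -/A1 iA1 oA1 /= parA1 chA1 -/F1.
  move: iR1 oR1; rewrite /indeg /outdeg /= => -> ->; by rewrite /= parR1 chR1 u2uF eq_sym uxF.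
rewrite red.
have memF b : b \in F = [&& b.1 != u, b.2 != u, b.1 != r, b.2 != r, b != (u,r) & b \in A].
  by rewrite mem_filter memF1 -!andbA.
have FA : {subset F <= A} by move=> b; rewrite memF => /andP[_ /and5P[_ _ _ _ ->]].
have Fn b : b \in F -> [&& b.1 != u, b.2 != u, b.1 != r & b.2 != r].
  by rewrite memF => /andP[-> /and5P[-> -> -> _ _]].
set L := [:: (pu,u); (u,r); (u,y); (u2,r); (r,x)].
have ryF' : (y == r) = false by rewrite eq_sym ryF.
have pe : perm_eq A (L ++ F).
  apply: decomp => //.
    by rewrite /= !inE !xpair_eqE puuF purF urF ryF ryF' (eq_sym u u2) u2uF u2rF !andbF /=.
  - by apply: filter_uniq.
  - by move=> b; rewrite !inE => /orP[/eqP->|/or4P[]/eqP->].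
  - move=> [b1 b2] b1A; rewrite memF /= !inE !xpair_eqE.
    case: (eqVneq b1 u) => [e|n1] /=.
      subst b1; move=> _; case: (out2 uA uo urA uyA b1A ry) => ->; by rewrite eqxx !orbT.
    case: (eqVneq b2 u) => [e|n2] /=.
      by subst b2; rewrite (in1 uA ui puA b1A) eqxx.
    case: (eqVneq b1 r) => [e|n3] /=.
      by subst b1; rewrite (out1 uA ro rxA b1A) eqxx !orbT.
    case: (eqVneq b2 r) => [e|n4] /=.
      subst b2 => _; case: (in2 uA ri urA u2A b1A (fun e => u2u (esym e))) => e; [by rewrite e eqxx in n1 | by rewrite e eqxx ?orbT].
    by rewrite b1A.
  - by move=> b; rewrite !inE => /orP[/eqP->|/or4P[]/eqP->] /=; apply/negP => /Fn /=; rewrite eqxx ?andbF.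
have notF1 : (pu, y) \notin F.
  apply/negP => /FA h; exact: puu (in1 uA yi uyA h).
have notF2 : (u2, x) \notin F.
  apply/negP => /FA h; exact: u2r (in1 uA xi rxA h).
have uwF w : w \notin [:: u; r] -> (u == w) = false /\ (r == w) = false.
  by rewrite !inE negb_or => /andP[a b]; split; apply/negbTE; rewrite eq_sym.
have tpu : Rlt (t pu) (t u) := HGT_strict hA puA unr.
have tuy : Rlt (t u) (t y) := HGT_strict hA uyA ynr.
have trx : Rlt (t r) (t x) := HGT_strict hA rxA xnr.
have tu2 : Rlt (t u2) (t r).
  have [H1 _ H3] := hA.
  have [le _] := H1 _ _ u2A.
  have h := proj1 (H3 r u u2 rR urA u2A (fun e => u2u (esym e))) tur.
  case: (Req_dec (t u2) (t r)) => e //; lra.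
have [nR bR hR] : [/\ network ((pu,y)::(u2,x)::F), binary ((pu,y)::(u2,x)::F)
                   & HGT_consistent ((pu,y)::(u2,x)::F) t].
  apply: (transfer (D := [:: u; r]) nA bA hA).
  - rewrite /= notF2 inE negb_or notF1 xpair_eqE (eq_sym y x) xyF andbF /=.
    by apply: filter_uniq.
  - move=> w /uwF [e1 e2]; rewrite /indeg /outdeg !(count_perm _ pe) /= e1 e2 /= !add0n !addn0.
    by rewrite !addnA.
  - move=> w; rewrite !inE => /orP[]/eqP->; rewrite /indeg /outdeg /=.
    + rewrite eq_sym uyF eq_sym uxF puuF u2uF !count0 //.
      * by move=> b /Fn /and4P[/negbTE->].
      * by move=> b /Fn /and4P[_ /negbTE->].
    + rewrite ryF' (eq_sym x r) rxF purF u2rF !count0 //.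
      * by move=> b /Fn /and4P[_ _ /negbTE->].
      * by move=> b /Fn /and4P[_ _ _ /negbTE->].
  - by move=> w; rewrite !inE => /orP[]/eqP->; rewrite ?ui ?ri.
  - move=> a b; rewrite !inE => /or3P[/eqP [-> ->]|/eqP [-> ->]|/FA]; last by left.
    + right; split => //; first lra.
      apply: (t_trans _ _ _ u); exact: t_step.
    + right; split => //; first lra.
      apply: (t_trans _ _ _ r); exact: t_step.
  - move=> a b ab aD lt; case: (boolP ((a,b) \in F)) => abF.
      by exists b; rewrite !inE abF !orbT.
    have := (perm_mem pe (a,b)); rewrite ab mem_cat (negbTE abF) orbF !inE !xpair_eqE.
    move: aD; rewrite !inE negb_or => /andP[/negbTE au /negbTE ar]; rewrite au ar /= orbF.
    case/esym/orP => /andP[/eqP -> _].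
    + exists y; split; first by rewrite mem_head. lra.
    + exists x; split; first by rewrite !inE eqxx orbT. lra.
split => //.
by rewrite (perm_size pe) size_cat /= addnC !addnS addn0 !ltnS leqW.
Qed.


Lemma base_case A :
  network A -> (forall w, w \in nodes A -> ~~ (is_tree_node A w || is_ret A w)) -> orchard A.
Proof.
move=> nA HI; have [uA acA rootA typA] := nA.
exists [::]; rewrite /reduce_seq /=; split.
  split => // v vA; apply/negP => r; by move: (HI v vA); rewrite r orbT.
have src a b : (a,b) \in A -> is_root A a.
  move=> ab; have aN : a \in nodes A by rewrite mem_nodes addn_gt0 (outdeg_pos ab) orbT.
  have := HI a aN; rewrite negb_or => /andP[n1 n2].
  have := typA a aN; rewrite (negbTE n1) (negbTE n2) /= => /orP[//|l1].
  by move: l1; rewrite /is_leaf => /andP[_ /eqP e]; move: (outdeg_pos ab); rewrite e.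
case: A uA acA rootA typA HI src nA => [|[a0 b0] A'] uA acA rootA typA HI src nA.
  by move: rootA; rewrite /nodes.
have a0b0 : (a0,b0) \in (a0,b0) :: A' by rewrite mem_head.
have same a b : (a,b) \in (a0,b0) :: A' -> a = a0.
  move=> ab; apply/eqP; apply/negP => /negP ne.
  have : 2 <= count (fun v => indeg ((a0, b0) :: A') v == 0) (nodes ((a0, b0) :: A')).
    apply: (count_ge (l := [:: a; a0])); first by rewrite /= inE ne.
    move=> w; rewrite !inE => /orP[]/eqP->.
    + have := src _ _ ab; rewrite /is_root => /andP[-> _].
      by rewrite mem_nodes addn_gt0 (outdeg_pos ab) orbT.
    + have := src _ _ a0b0; rewrite /is_root => /andP[-> _].
      by rewrite mem_nodes addn_gt0 (outdeg_pos a0b0) orbT.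
  by rewrite rootA.
have o1 : outdeg ((a0, b0) :: A') a0 = 1.
  by have := src _ _ a0b0; rewrite /is_root => /andP[_ /eqP].
have sz : size ((a0, b0) :: A') = 1.
  rewrite -o1 /outdeg -(count_predT) ; apply: eq_in_count => [[a b]] ab /=.
  by rewrite (same _ _ ab) eqxx.
have ne : (a0 == b0) = false by apply/eqP; exact: arc_neq acA a0b0.
case: A' sz {uA acA rootA typA HI src nA a0b0 same o1} => // _.
rewrite /leaves /nodes /= inE ne /= /is_leaf /indeg /outdeg /= eqxx ne /=.
by rewrite (eq_sym b0 a0) ne eqxx.
Qed.


Lemma step A t : network A -> binary A -> HGT_consistent A t ->
  ~ (forall w, w \in nodes A -> ~~ (is_tree_node A w || is_ret A w)) ->
  exists xy, [/\ network (reduce A xy), binary (reduce A xy), HGT_consistent (reduce A xy) t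
    & size (reduce A xy) < size A].
Proof.
move=> nA bA hA nI.
have [uA acA rootA typA] := nA.
have [H1 H2 H3] := hA.
set I := [seq w <- nodes A | is_tree_node A w || is_ret A w].
have In : I != [::].
  apply/negP => /eqP e; apply: nI => w wA; apply/negP => h.
  have wI : w \in I by rewrite /I mem_filter h wA.
  by move: wI; rewrite e.
have [m mI mmax] := exists_max t In.
have inN a c : (a,c) \in A -> c \in nodes A.
  by move=> ac; rewrite mem_nodes addn_gt0 (indeg_pos ac).
have inNs a c : (a,c) \in A -> a \in nodes A.
  by move=> ac; rewrite mem_nodes addn_gt0 (outdeg_pos ac) orbT.
have ntyp a c : (a,c) \in A -> [|| is_tree_node A c, is_ret A c | is_leaf A c].
  move=> ac; have := typA c (inN _ _ ac); case/orP => // /andP[/eqP e _].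
  by move: (indeg_pos ac); rewrite e.
have cleaf a c : (a,c) \in A -> Rlt (t m) (t c) -> is_leaf A c.
  move=> ac lt; case/or3P: (ntyp _ _ ac) => // h.
  + have := mmax c; rewrite mem_filter h (inN _ _ ac) /= => /(_ isT); lra.
  + have := mmax c; rewrite mem_filter h orbT (inN _ _ ac) /= => /(_ isT); lra.
have mN : m \in nodes A by move: mI; rewrite mem_filter => /andP[].
have retcase u r y x u2 pu : is_tree_node A u -> is_ret A r -> (u,r) \in A -> t u = t r ->
    (u,y) \in A -> (r,x) \in A -> (u2,r) \in A -> u2 <> u -> (pu,u) \in A ->
    is_leaf A x -> is_leaf A y -> exists xy, [/\ network (reduce A xy), binary (reduce A xy),
      HGT_consistent (reduce A xy) t & size (reduce A xy) < size A].
  move=> h1 h2 h3 h4 h5 h6 h7 h8 h9 h10 h11; exists (x,y).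
  exact: (ret_step nA bA hA h1 h2 h3 h4 h5 h6 h7 h8 h9 h10 h11).
have ret_child r : is_ret A r -> r \in nodes A -> Rle (t m) (t r) -> exists x, (r,x) \in A /\ is_leaf A x.
  move=> rr rN le.
  have ro : outdeg A r = 1 by move: rr => /andP[_ /eqP].
  have ro0 : 0 < outdeg A r by rewrite ro.
  have [x rx] := ex_out ro0.
  have [w [rw lt]] := H2 r rN ro0.
  have e := out1 uA ro rx rw; subst w.
  exists x; split => //; apply: (cleaf r) => //; lra.
have tpar u r : is_ret A r -> (u,r) \in A -> t u = t r -> t r = t m ->
    is_tree_node A u /\ exists y, (u,y) \in A /\ is_leaf A y.
  move=> rr ur e1 e2.
  have uN := inNs _ _ ur.
  have [w [uw lt]] := H2 u uN (outdeg_pos ur).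
  have wr : w <> r by move=> e; subst w; lra.
  have uT : is_tree_node A u.
    case/or4P: (typA u uN) => // h.
    + move: h; rewrite /is_root => /andP[_ /eqP o]; by case: wr; exact: out1 uA o ur uw.
    + move: h; rewrite /is_ret => /andP[_ /eqP o]; by case: wr; exact: out1 uA o ur uw.
    + move: h; rewrite /is_leaf => /andP[_ /eqP o]; by move: (outdeg_pos ur); rewrite o.
  split => //; exists w; split => //; apply: (cleaf u) => //; lra.
move: (mI); rewrite mem_filter => /andP[/orP[mT|mR] _].
- have [mi mo] : indeg A m = 1 /\ outdeg A m = 2.
    have [o2 _] := bA m mN; split; last exact: o2.
    by move: mT => /andP[/eqP].
  have mo0 : 0 < outdeg A m by rewrite mo.
  have mo2 : 2 <= outdeg A m by rewrite mo.
  have mi0 : 0 < indeg A m by rewrite mi.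
  have [w [mw lt]] := H2 m mN mo0.
  have lw := cleaf _ _ mw lt.
  have [w' [mw' nw]] := ex_out2 uA mo2 mw.
  have [pm pmA] := ex_in mi0.
  case: (boolP (is_leaf A w')) => lw'.
    exists (w', w); exact: cherry_step nA bA hA mT pmA mw' mw nw lw' lw.
  have rw' : is_ret A w' /\ t w' = t m.
    have [le h] := H1 _ _ mw'.
    have le2 : Rle (t w') (t m).
      apply: mmax; rewrite mem_filter (inN _ _ mw') andbT.
      by case/or3P: (ntyp _ _ mw') => [->|->|h']; rewrite ?orbT //; rewrite h' in lw'.
    have e : t m = t w' by lra.
    by split; [exact: h|rewrite e].
  case: rw' => rw' e.
  have [x [w'x lx]] := ret_child w' rw' (inN _ _ mw') (ltac:(rewrite e; lra)).
  have ri2 : 2 <= indeg A w' by move: rw' => /andP[].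
  have [u2 [u2A u2m]] := ex_in2 uA ri2 mw'.
  exact: (retcase m w' w x u2 pm mT rw' mw' (esym e) mw w'x u2A u2m pmA lx lw).
- have [x [mx lx]] := ret_child m mR mN (Rle_refl _).
  have mi2 : 2 <= indeg A m by move: mR => /andP[].
  have mi0 : 0 < indeg A m by apply: leq_trans mi2.
  have [p1 p1A] := ex_in mi0.
  have [p2 [p2A p21]] := ex_in2 uA mi2 p1A.
  have H := H3 m p1 p2 mR p1A p2A (fun e => p21 (esym e)).
  have [u [u2 [uA' u2A eu u2u]]] : exists u u2, [/\ (u,m) \in A, (u2,m) \in A, t u = t m & u2 <> u].
    case: (Req_dec (t p1) (t m)) => e1.
      by exists p1, p2.
    case: (Req_dec (t p2) (t m)) => e2.
      by exists p2, p1; split => // e; apply: p21.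
    by exfalso; apply: e1; apply H.
  have [uT [y [uy ly]]] := tpar u m mR uA' eu erefl.
  have ui0 : 0 < indeg A u by move: uT => /andP[/eqP -> _].
  have [pu puA] := ex_in ui0.
  exact: (retcase u m y x u2 pu uT mR uA' eu uy mx u2A u2u puA lx ly).
Qed.

Theorem main_ind n : forall A, size A <= n -> network A -> binary A ->
  (exists t : nat -> R, HGT_consistent A t) -> orchard A.
Proof.
elim: n => [|n IH] A sA nA bA [t hA].
  have [_ _ rootA _] := nA.
  by move: sA rootA; rewrite leqn0 size_eq0 => /eqP ->.
case: (classic (forall w, w \in nodes A -> ~~ (is_tree_node A w || is_ret A w))) => HI.
  exact: base_case.
have [xy [nR bR hR sR]] := step nA bA hA HI.
have [S [S1 S2]] : orchard (reduce A xy).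
  apply: IH => //; last by exists t.
  by rewrite -ltnS; apply: leq_trans sR sA.
by exists (xy :: S).
Qed.


Theorem mainTheorem4 (A : arcs) :
  network A -> binary A -> (exists t : nat -> R, HGT_consistent A t) -> orchard A.
Proof.
move=> nA bA hA; exact: (main_ind (leqnn (size A)) nA bA hA).
Qed.
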